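(* For any subset $L\subset G$ we have $L^\#=L^{\#\#}+L^\bullet$ as ideals of $\kappa G^\#$.
   Context: Let $\kappa$ be a field of characteristic $0$. For a group $G$, let $*:\kappa G\to\kappa G$ be the $\kappa$-linear map with $g^*=g^{-1}$ for $g\in G$, and $(\kappa G)^*$ its fixed points. $A_G$ is the quotient of $\kappa G$ by the two-sided ideal generated by all $ab-ba$ with $a\in\kappa G$, $b\in(\kappa G)^*$; $*$ descends to $A_G$, and $\kappa G^\#=\{x\in A_G:x^*=x\}$ (a commutative subring of the centre of $A_G$). Group elements are identified with their images in $A_G$, and $\bar x=\tfrac12(x+x^* )$ for $x\in A_G$. For $L\subset G$: $L^\#$ is the ideal of $\kappa G^\#$ generated by $\{\overline{xl}-\bar x: x\in A_G, l\in L\}$; $L^{\#\#}$ is the ideal generated by $\{\overline{xl}-\overline{xl^{-1}}: x\in A_G, l\in L\}$; $L^\bullet$ is the ideal generated by $\{1-\bar l: l\in L\}$. *)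

(* Defs.v *)
(* Group algebra kappa G of an arbitrary (possibly infinite)
   group G, modelled by formal finite sums (lists of pairs (coefficient, group
   element)) up to equality of coefficient functions; the algebra A_G is
   modelled by the same representatives up to congruence modulo the two-sided
   ideal I_G generated by the commutators [a,b], b = star b. *)
From HB Require Import structures.
From mathcomp Require Import all_boot all_algebra.

Set Implicit Arguments.
Unset Strict Implicit.
Unset Printing Implicit Defensive.

Import GRing.Theory.
Local Open Scope ring_scope.

Section GroupAlgebra.
Variables (K : fieldType) (G : groupType).

Definition kG := seq (K * G).

Definition coef (x : kG) (g : G) : K := \sum_(p <- x | p.2 == g) p.1.

Definition kG_eq (x y : kG) : Prop := forall g, coef x g = coef y g.

Definition kG0 : kG := [::].
Definition kG_add (x y : kG) : kG := x ++ y.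
Definition kG_scale (c : K) (x : kG) : kG := [seq (c * p.1, p.2) | p <- x].
Definition kG_sub (x y : kG) : kG := kG_add x (kG_scale (-1) y).
Definition kG_mul (x y : kG) : kG :=
  [seq (p.1 * q.1, monoid.mul p.2 q.2) | p <- x, q <- y].
Definition kG_of (g : G) : kG := [:: (1, g)].
Definition kG_star (x : kG) : kG := [seq (p.1, monoid.inv p.2) | p <- x].

Definition kG_selfadj (b : kG) : Prop := kG_eq (kG_star b) b.

Inductive inI : kG -> Prop :=
  | inI_gen a b c d : kG_selfadj b ->
      inI (kG_mul c (kG_mul (kG_sub (kG_mul a b) (kG_mul b a)) d))
  | inI_zero : inI kG0
  | inI_add x y : inI x -> inI y -> inI (kG_add x y)
  | inI_eq x y : kG_eq x y -> inI x -> inI y.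

Definition AG_eq (x y : kG) : Prop := inI (kG_sub x y).

(* x (as an element of A_G) lies in kappa G^# *)
Definition sharp (x : kG) : Prop := AG_eq (kG_star x) x.

Definition bar (x : kG) : kG := kG_scale (2%:R)^-1 (kG_add x (kG_star x)).

(* the ideal of the commutative ring kappa G^# generated by a set S of elements
   of kappa G^#, as a set of elements of A_G (closed under equality in A_G) *)
Inductive inIdeal (S : kG -> Prop) : kG -> Prop :=
  | inIdeal_zero : inIdeal S kG0
  | inIdeal_gen r s : sharp r -> S s -> inIdeal S (kG_mul r s)
  | inIdeal_add x y : inIdeal S x -> inIdeal S y -> inIdeal S (kG_add x y)
  | inIdeal_eq x y : AG_eq x y -> inIdeal S x -> inIdeal S y.

Definition inIdealSum (I J : kG -> Prop) (y : kG) : Prop :=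
  exists a b, I a /\ J b /\ AG_eq y (kG_add a b).

Variable L : G -> Prop.

Definition gen_sharp (y : kG) : Prop :=
  exists x l, L l /\ y = kG_sub (bar (kG_mul x (kG_of l))) (bar x).
Definition gen_sharpsharp (y : kG) : Prop :=
  exists x l, L l /\
    y = kG_sub (bar (kG_mul x (kG_of l))) (bar (kG_mul x (kG_of (monoid.inv l)))).
Definition gen_bullet (y : kG) : Prop :=
  exists l, L l /\ y = kG_sub (kG_of monoid.one) (bar (kG_of l)).

Definition Lsharp := inIdeal gen_sharp.
Definition Lsharpsharp := inIdeal gen_sharpsharp.
Definition Lbullet := inIdeal gen_bullet.

End GroupAlgebra.

(* Main.v *)
Require Import Defs.
From HB Require Import structures.
From mathcomp Require Import all_boot all_algebra.
From mathcomp Require Import ring.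

Set Implicit Arguments.
Unset Strict Implicit.
Unset Printing Implicit Defensive.
Import GRing.Theory.
Local Open Scope ring_scope.

Section Infra.
Variables (K : fieldType) (G : groupType).
Local Notation kG := (kG K G).
Local Notation gm := (@monoid.mul G).
Local Notation gi := (@monoid.inv G).
Local Notation coef := (@coef K G).
Local Notation kof := (@kG_of K G).
Implicit Types x y z : kG.

Lemma coef_nil g : coef [::] g = 0.
Proof. by rewrite /Defs.coef big_nil. Qed.

Lemma coef_cons p x g : coef (p :: x) g = (if p.2 == g then p.1 else 0) + coef x g.
Proof. by rewrite /Defs.coef big_cons; case: ifP; rewrite ?add0r. Qed.

Lemma coef_add x y g : coef (kG_add x y) g = coef x g + coef y g.
Proof. by rewrite /Defs.coef /kG_add big_cat. Qed.

Lemma coef_scale c x g : coef (kG_scale c x) g = c * coef x g.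
Proof.
elim: x => [|p x IH]; first by rewrite /kG_scale /= !coef_nil mulr0.
by rewrite /kG_scale /= !coef_cons -/(kG_scale c x) IH mulrDr /=; case: ifP; rewrite ?mulr0.
Qed.

Lemma coef_sub x y g : coef (kG_sub x y) g = coef x g - coef y g.
Proof. by rewrite /kG_sub coef_add coef_scale mulN1r. Qed.

Lemma coef_star x g : coef (kG_star x) g = coef x (gi g).
Proof.
elim: x => [|p x IH]; first by rewrite /kG_star /= !coef_nil.
rewrite /kG_star /= !coef_cons -/(kG_star x) IH /=.
congr (_ + _); rewrite -(inj_eq (@monoid.invg_inj G)) monoid.invgK.
by [].
Qed.

Lemma coef_of h g : coef (kof h) g = if h == g then 1 else 0.
Proof. by rewrite /kG_of coef_cons coef_nil addr0. Qed.

Lemma coef_mul2 x y g : coef (kG_mul x y) g =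
  \sum_(p <- x) \sum_(q <- y) (if gm p.2 q.2 == g then p.1 * q.1 else 0).
Proof.
rewrite /Defs.coef /kG_mul big_mkcond /=.
by rewrite big_allpairs_dep.
Qed.

Lemma coef_mulL x y g : coef (kG_mul x y) g = \sum_(p <- x) p.1 * coef y (gm (gi p.2) g).
Proof.
rewrite coef_mul2. apply: eq_bigr => p _.
rewrite /Defs.coef [in RHS]big_mkcond mulr_sumr; apply: eq_bigr => q _.
have -> : (gm p.2 q.2 == g) = (q.2 == gm (gi p.2) g).
  apply/eqP/eqP => [<-|->]; by rewrite ?monoid.mulKg ?monoid.mulVKg.
by case: ifP; rewrite ?mulr0.
Qed.

Lemma coef_mulR x y g : coef (kG_mul x y) g = \sum_(q <- y) q.1 * coef x (gm g (gi q.2)).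
Proof.
rewrite coef_mul2 exchange_big; apply: eq_bigr => q _.
rewrite /Defs.coef [in RHS]big_mkcond mulr_sumr; apply: eq_bigr => p _.
have -> : (gm p.2 q.2 == g) = (p.2 == gm g (gi q.2)).
  apply/eqP/eqP => [<-|->]; by rewrite ?monoid.mulgK ?monoid.mulgVK.
by case: ifP; rewrite ?mulr0 // mulrC.
Qed.


Lemma coef_mulof x h g : coef (kG_mul x (kof h)) g = coef x (gm g (gi h)).
Proof. by rewrite coef_mulR /kG_of big_cons big_nil addr0 mul1r. Qed.

Lemma coef_ofmul x h g : coef (kG_mul (kof h) x) g = coef x (gm (gi h) g).
Proof. by rewrite coef_mulL /kG_of big_cons big_nil addr0 mul1r. Qed.

Local Notation keq := (@kG_eq K G).

Lemma keq_refl x : keq x x. Proof. by []. Qed.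
Lemma keq_sym x y : keq x y -> keq y x. Proof. by move=> H g; rewrite H. Qed.
Lemma keq_trans x y z : keq x y -> keq y z -> keq x z.
Proof. by move=> H1 H2 g; rewrite H1 H2. Qed.

Lemma add_eq x x' y y' : keq x x' -> keq y y' -> keq (kG_add x y) (kG_add x' y').
Proof. by move=> H1 H2 g; rewrite !coef_add H1 H2. Qed.
Lemma scale_eq c x x' : keq x x' -> keq (kG_scale c x) (kG_scale c x').
Proof. by move=> H1 g; rewrite !coef_scale H1. Qed.
Lemma sub_eq x x' y y' : keq x x' -> keq y y' -> keq (kG_sub x y) (kG_sub x' y').
Proof. by move=> H1 H2 g; rewrite !coef_sub H1 H2. Qed.
Lemma star_eq x x' : keq x x' -> keq (kG_star x) (kG_star x').
Proof. by move=> H1 g; rewrite !coef_star H1. Qed.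
Lemma mul_eq x x' y y' : keq x x' -> keq y y' -> keq (kG_mul x y) (kG_mul x' y').
Proof.
move=> H1 H2 g; rewrite coef_mulR.
rewrite (eq_bigr (fun q => q.1 * coef x' (gm g (gi q.2)))); last by move=> q _; rewrite H1.
rewrite -coef_mulR !coef_mulL; apply: eq_bigr => p _; by rewrite H2.
Qed.

Lemma mul_addr z x y : keq (kG_mul z (kG_add x y)) (kG_add (kG_mul z x) (kG_mul z y)).
Proof. by move=> g; rewrite coef_add !coef_mulR big_cat. Qed.
Lemma mul_addl z x y : keq (kG_mul (kG_add x y) z) (kG_add (kG_mul x z) (kG_mul y z)).
Proof. by move=> g; rewrite coef_add !coef_mulL big_cat. Qed.
Lemma mul_scaler c z x : keq (kG_mul z (kG_scale c x)) (kG_scale c (kG_mul z x)).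
Proof.
move=> g; rewrite coef_scale !coef_mulL mulr_sumr; apply: eq_bigr => p _.
by rewrite coef_scale mulrCA.
Qed.
Lemma scale_mull c z x : keq (kG_mul (kG_scale c z) x) (kG_scale c (kG_mul z x)).
Proof.
move=> g; rewrite coef_scale !coef_mulR mulr_sumr; apply: eq_bigr => p _.
by rewrite coef_scale mulrCA.
Qed.
Lemma mul_assoc x y z : keq (kG_mul (kG_mul x y) z) (kG_mul x (kG_mul y z)).
Proof.
move=> g; rewrite coef_mulR [in RHS]coef_mulR /kG_mul big_allpairs_dep /=.
rewrite exchange_big /=; apply: eq_bigr => q _.
rewrite -/(kG_mul x y) coef_mulR mulr_sumr; apply: eq_bigr => p _ /=.
by rewrite monoid.invgM monoid.mulgA mulrCA mulrA.
Qed.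
Lemma mul_nilr z : keq (kG_mul z [::]) [::].
Proof. by move=> g; rewrite coef_mulR big_nil /Defs.coef big_nil. Qed.
Lemma mul_nill z : keq (kG_mul [::] z) [::].
Proof. by []. Qed.
Lemma star_star x : keq (kG_star (kG_star x)) x.
Proof. by move=> g; rewrite !coef_star monoid.invgK. Qed.
Lemma star_scale c x : keq (kG_star (kG_scale c x)) (kG_scale c (kG_star x)).
Proof. by move=> g; rewrite !(coef_star, coef_scale). Qed.
Lemma star_add x y : keq (kG_star (kG_add x y)) (kG_add (kG_star x) (kG_star y)).
Proof. by move=> g; rewrite !(coef_star, coef_add). Qed.
Lemma star_mul x y : keq (kG_star (kG_mul x y)) (kG_mul (kG_star y) (kG_star x)).
Proof.
move=> g; rewrite coef_star coef_mulR [in RHS]coef_mulL /kG_star big_map.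
apply: eq_bigr => q _ /=; rewrite -/(kG_star x) coef_star.
by rewrite monoid.invgM monoid.invgK.
Qed.


Lemma inI_keq x y : keq x y -> inI x -> inI y.
Proof. exact: inI_eq. Qed.

Lemma inI_scale c x : inI x -> inI (kG_scale c x).
Proof.
elim=> [a b c0 d Hb|||x1 y1 H1 E IH].
- apply: inI_keq (scale_mull _ _ _) _; exact: inI_gen.
- exact: (@inI_zero K G).
- by move=> x1 y1 _ H1 _ H2; rewrite /kG_scale /kG_add map_cat; exact: inI_add.
- by apply: inI_keq IH; apply: scale_eq.
Qed.

Lemma inI_mull z x : inI x -> inI (kG_mul z x).
Proof.
elim=> [a b c0 d Hb|||x1 y1 H1 E IH].
- apply: inI_keq (mul_assoc _ _ _) _; exact: inI_gen.
- apply: inI_keq (keq_sym (mul_nilr z)) _; exact: (@inI_zero K G).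
- move=> x1 y1 _ H1 _ H2; apply: inI_keq (keq_sym (mul_addr _ _ _)) _; exact: inI_add.
- by apply: inI_keq IH; apply: mul_eq.
Qed.

Lemma inI_mulr z x : inI x -> inI (kG_mul x z).
Proof.
elim=> [a b c0 d Hb|||x1 y1 H1 E IH].
- apply: inI_keq (keq_sym (mul_assoc _ _ _)) _.
  apply: inI_keq (mul_eq (keq_refl c0) (keq_sym (mul_assoc _ _ _))) _; exact: inI_gen.
- exact: (@inI_zero K G).
- move=> x1 y1 _ H1 _ H2; apply: inI_keq (keq_sym (mul_addl _ _ _)) _; exact: inI_add.
- by apply: inI_keq IH; apply: mul_eq.
Qed.

Local Notation aeq := (@AG_eq K G).

Lemma AG_keq x y : keq x y -> aeq x y.
Proof.
move=> H; rewrite /AG_eq in H *; apply: inI_keq (@inI_zero K G) => g.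
by rewrite coef_nil coef_sub H subrr.
Qed.

Lemma AG_sym x y : aeq x y -> aeq y x.
Proof.
move=> H; apply: inI_keq (inI_scale (-1) H) => g.
by rewrite coef_scale !coef_sub; ring.
Qed.

Lemma AG_trans x y z : aeq x y -> aeq y z -> aeq x z.
Proof.
move=> H1 H2; apply: inI_keq (inI_add H1 H2) => g.
by rewrite coef_add !coef_sub; ring.
Qed.

Lemma AG_add x x' y y' : aeq x x' -> aeq y y' -> aeq (kG_add x y) (kG_add x' y').
Proof.
move=> H1 H2; apply: inI_keq (inI_add H1 H2) => g.
by rewrite !(coef_add, coef_sub); ring.
Qed.

Lemma AG_scale c x y : aeq x y -> aeq (kG_scale c x) (kG_scale c y).
Proof.
move=> H; apply: inI_keq (inI_scale c H) => g.
by rewrite !(coef_scale, coef_sub); ring.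
Qed.

Lemma AG_mull z x y : aeq x y -> aeq (kG_mul z x) (kG_mul z y).
Proof.
move=> H; apply: inI_keq (inI_mull z H) => g.
rewrite coef_sub !coef_mulL -sumrB; apply: eq_bigr => p _.
by rewrite coef_sub mulrBr.
Qed.

Lemma AG_mulr z x y : aeq x y -> aeq (kG_mul x z) (kG_mul y z).
Proof.
move=> H; apply: inI_keq (inI_mulr z H) => g.
rewrite coef_sub !coef_mulR -sumrB; apply: eq_bigr => p _.
by rewrite coef_sub mulrBr.
Qed.

Lemma AG_comm a b : kG_selfadj b -> aeq (kG_mul a b) (kG_mul b a).
Proof.
move=> Hb; apply: inI_keq (inI_gen a (kof monoid.one) (kof monoid.one) Hb) => g.
by rewrite coef_ofmul coef_mulof monoid.invg1 monoid.mul1g monoid.mulg1.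
Qed.

Lemma selfadj_scale (c : K) (b : kG) : kG_selfadj b -> kG_selfadj (kG_scale c b).
Proof. by move=> H g; rewrite coef_star !coef_scale -coef_star H. Qed.

Lemma selfadj_bar (x : kG) : kG_selfadj (bar x).
Proof. by move=> g; rewrite coef_star !(coef_scale, coef_add, coef_star) monoid.invgK addrC. Qed.

Lemma sharp_bar (x : kG) : sharp (bar x).
Proof. exact: AG_keq (selfadj_bar x). Qed.

Lemma sharp_scale (c : K) (r : kG) : sharp r -> sharp (kG_scale c r).
Proof.
move=> H; apply: AG_trans (AG_keq (star_scale _ _)) _; exact: AG_scale.
Qed.

Variable two : (2%:R : K) != 0.
Local Notation u := ((2%:R : K)^-1).

Lemma AG_bar (r : kG) : sharp r -> aeq r (bar r).
Proof.
move=> H; apply: inI_keq (inI_scale (- u) H) => g.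
rewrite !(coef_scale, coef_sub, coef_add, coef_star); by field.
Qed.

Lemma sharp_central (r z : kG) : sharp r -> aeq (kG_mul r z) (kG_mul z r).
Proof.
move=> H; apply: AG_trans (AG_mulr z (AG_bar H)) _.
apply: AG_trans (AG_sym (AG_comm z (selfadj_bar r))) _.
apply: AG_mull; apply: AG_sym; exact: AG_bar.
Qed.

Lemma sharp_mul (r v : kG) : sharp r -> kG_selfadj v -> sharp (kG_mul r v).
Proof.
move=> Hr Hv; apply: AG_trans (AG_keq (star_mul _ _)) _.
apply: AG_trans (AG_keq (mul_eq Hv (keq_refl _))) _.
apply: AG_trans (AG_mull _ Hr) _.
apply: AG_sym; exact: AG_comm.
Qed.


Lemma coef_mul_addr z x y g : coef (kG_mul z (kG_add x y)) g = coef (kG_mul z x) g + coef (kG_mul z y) g.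
Proof. by rewrite mul_addr coef_add. Qed.
Lemma coef_mul_addl z x y g : coef (kG_mul (kG_add x y) z) g = coef (kG_mul x z) g + coef (kG_mul y z) g.
Proof. by rewrite mul_addl coef_add. Qed.
Lemma coef_mul_scaler c z x g : coef (kG_mul z (kG_scale c x)) g = c * coef (kG_mul z x) g.
Proof. by rewrite mul_scaler coef_scale. Qed.
Lemma coef_mul_scalel c z x g : coef (kG_mul (kG_scale c z) x) g = c * coef (kG_mul z x) g.
Proof. by rewrite scale_mull coef_scale. Qed.
Lemma coef_mul_subr z x y g : coef (kG_mul z (kG_sub x y)) g = coef (kG_mul z x) g - coef (kG_mul z y) g.
Proof. by rewrite /kG_sub coef_mul_addr coef_mul_scaler mulN1r. Qed.
Lemma coef_mul_subl z x y g : coef (kG_mul (kG_sub x y) z) g = coef (kG_mul x z) g - coef (kG_mul y z) g.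
Proof. by rewrite /kG_sub coef_mul_addl coef_mul_scalel mulN1r. Qed.

Definition sgen x l := kG_sub (bar (kG_mul x (kof l))) (bar x).
Definition hgen x l := kG_sub (bar (kG_mul x (kof l))) (bar (kG_mul x (kof (gi l)))).
Definition egen l := kG_sub (kof monoid.one) (bar (kof l)).

Ltac coefs := rewrite /sgen /hgen /egen /bar;
  rewrite ?(coef_sub, coef_add, coef_scale, coef_star, coef_mul_subr, coef_mul_subl,
    coef_mul_addr, coef_mul_addl, coef_mul_scaler, coef_mul_scalel, coef_mulof, coef_ofmul,
    coef_star);
  rewrite ?(monoid.invgM, monoid.invgK, monoid.invg1, monoid.mulgA);
  rewrite ?(monoid.mulgK, monoid.mulgVK, monoid.mulVg, monoid.mulgV, monoid.mul1g, monoid.mulg1).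

Lemma hgen_split x l : keq (hgen x l) (kG_add (sgen x l) (sgen (kG_mul x (kof (gi l))) l)).
Proof. by move=> g; coefs; ring. Qed.


Lemma egen_eq l : keq (egen l) (kG_scale (-1) (sgen (kof monoid.one) l)).
Proof.
have E1 h k : coef (kof monoid.one) (gm h (gi k)) = coef (kof k) h.
  rewrite !coef_of; congr (if _ then _ else _).
  apply/eqP/eqP => E.
    by rewrite -[h](monoid.mulgVK k) -E monoid.mul1g.
  by rewrite -E monoid.mulgV.
have E2 h : coef (kof monoid.one) (gi h) = coef (kof monoid.one) h.
  rewrite !coef_of; congr (if _ then _ else _).
  apply/eqP/eqP => E.
    by rewrite -[h]monoid.invgK -E monoid.invg1.
  by rewrite -E monoid.invg1.
move=> g; coefs; rewrite !E1 E2; by field.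
Qed.

Lemma core x l : aeq (sgen x l)
  (kG_add (kG_scale u (hgen x l)) (kG_mul (kG_scale (-1) (bar x)) (egen l))).
Proof.
set m := kG_add (kof l) (kof (gi l)).
have Hm : kG_selfadj m by move=> g; rewrite /m !(coef_star, coef_add, coef_of) monoid.eqg_inv -monoid.eqg_invLR addrC.
have := inI_scale (- (u * u)) (inI_gen (kG_star x) (kof monoid.one) (kof monoid.one) Hm).
rewrite /AG_eq; move=> H; apply: inI_keq H => g.
rewrite /m; coefs. by field.
Qed.


Lemma main_eq (L : G -> Prop) (y : kG) :
  Lsharp L y <-> inIdealSum (Lsharpsharp L) (Lbullet L) y.
Proof.
split.
- elim=> [|r s0 Hr [x [l [Hl ->]]]|x1 y1 _ [a1 [b1 [Ha1 [Hb1 E1]]]] _ [a2 [b2 [Ha2 [Hb2 E2]]]]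
         |x1 y1 Exy _ [a [b [Ha [Hb E]]]]].
  + exists [::], [::]; split; first exact: inIdeal_zero.
    split; first exact: inIdeal_zero.
    exact: AG_keq (keq_refl _).
  + exists (kG_mul (kG_scale u r) (hgen x l)),
      (kG_mul (kG_mul r (kG_scale (-1) (bar x))) (egen l)).
    split.
      apply: inIdeal_gen; first exact: sharp_scale.
      by exists x, l.
    split.
      apply: inIdeal_gen; first by apply: sharp_mul => //; apply: selfadj_scale; exact: selfadj_bar.
      by exists l.
    apply: AG_trans (AG_mull r (core x l)) _.
    apply: AG_keq; apply: keq_trans (mul_addr _ _ _) _.
    apply: add_eq.
      exact: keq_trans (mul_scaler _ _ _) (keq_sym (scale_mull _ _ _)).
    exact: keq_sym (mul_assoc _ _ _).
  + exists (kG_add a1 a2), (kG_add b1 b2).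
    split; first exact: inIdeal_add.
    split; first exact: inIdeal_add.
    apply: AG_trans (AG_add E1 E2) _; apply: AG_keq => g.
    by rewrite !coef_add; ring.
  + exists a, b; split => //; split => //.
    exact: AG_trans (AG_sym Exy) E.
- move=> [a [b [Ha [Hb E]]]].
  apply: (inIdeal_eq (AG_sym E)); apply: inIdeal_add.
  + elim: Ha => [|r h Hr [x [l [Hl ->]]]|x1 y1 _ H1 _ H2|x1 y1 Exy _ H].
    * exact: inIdeal_zero.
    * apply: (@inIdeal_eq _ _ _ (kG_add (kG_mul r (sgen x l)) (kG_mul r (sgen (kG_mul x (kof (gi l))) l)))).
        apply: AG_keq; apply: keq_trans (keq_sym (mul_addr _ _ _)) _.
        apply: mul_eq (keq_refl _) _; exact: keq_sym (hgen_split x l).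
      apply: inIdeal_add; apply: inIdeal_gen => //.
        by exists x, l.
      by exists (kG_mul x (kof (gi l))), l.
    * exact: inIdeal_add.
    * exact: inIdeal_eq Exy H.
  + elim: Hb => [|r h Hr [l [Hl ->]]|x1 y1 _ H1 _ H2|x1 y1 Exy _ H].
    * exact: inIdeal_zero.
    * apply: (@inIdeal_eq _ _ _ (kG_mul (kG_scale (-1) r) (sgen (kof monoid.one) l))).
        apply: AG_keq; apply: keq_trans (scale_mull _ _ _) _.
        apply: keq_trans (keq_sym (mul_scaler _ _ _)) _.
        apply: mul_eq (keq_refl _) _; exact: keq_sym (egen_eq l).
      apply: inIdeal_gen; first exact: sharp_scale.
      by exists (kof monoid.one), l.
    * exact: inIdeal_add.
    * exact: inIdeal_eq Exy H.
Qed.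

End Infra.

Theorem mainTheorem5 (K : fieldType) (G : groupType)
    (charK0 : [pchar K]%R =i pred0) (L : G -> Prop) :
  forall y : kG K G,
    Lsharp L y <-> inIdealSum (Lsharpsharp L) (Lbullet L) y.
Proof.
have two : (2%:R : K) != 0 by rewrite ((GRing.pcharf0P K).1 charK0 2).
move=> y; exact: main_eq two L y.
Qed.
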